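(* Let $q$ be a prime power and let $\alpha$ be a primitive element of $GF(q^2)$, so that every element $x\in GF(q^2)$ can be written uniquely as $x=a+b\alpha$ with $a,b\in GF(q)$. (i) For each $c\in GF(q)^*$ let $S_c=\{x\in GF(q^2)^*: x=a+c\alpha \text{ for some } a\in GF(q)\}$. Then the family $\{S_c\}_{c\in GF(q)^*}$ is a $(q^2-1,q-1,q,q-1,0)$-DPDF and a $(q^2-1,q-1,q,(q-1)(q-2),q^2-q)$-EPDF in the multiplicative group $GF(q^2)^*$. (ii) For each $c\in GF(q)^*$ let $S'_c=\{i: \alpha^i\in S_c,\ 0\le i\le q^2-2\}\subseteq \mathbb{Z}_{q^2-1}$. Then the family $\{S'_c\}_{c\in GF(q)^*}$ is a $(q^2-1,q-1,q,q-1,0)$-DPDF and a $(q^2-1,q-1,q,(q-1)(q-2),q^2-q)$-EPDF in the additive group $\mathbb{Z}_{q^2-1}$.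
   Context: Let $G$ be a finite group with identity $e$, written multiplicatively (in an additive group such as $\mathbb{Z}_v$ read $xy^{-1}$ as $x-y$ and $e$ as $0$); $G^*=G\setminus\{e\}$. For $D_1,D_2\subseteq G$, $\Delta(D_1,D_2)$ is the multiset $\{xy^{-1}: x\in D_1, y\in D_2\}$, and for $D\subseteq G$, $\Delta(D)$ is the multiset $\{xy^{-1}: x,y\in D, x\neq y\}$. For a family $A=\{A_1,\dots,A_s\}$ of pairwise disjoint subsets of $G$, ${\rm Int}(A)$ is the multiset union of the $\Delta(A_i)$, and ${\rm Ext}(A)$ is the multiset union of $\Delta(A_i,A_j)$ over all ordered pairs $i\neq j$. If $|G|=v$, a $(v,s,k,\lambda,\mu)$-disjoint partial difference family (DPDF) is a family of $s$ pairwise disjoint $k$-subsets $A_1,\dots,A_s$ of $G^*$ such that, with $S=\bigcup_i A_i$, the multiset ${\rm Int}(A)$ contains each element of $S$ exactly $\lambda$ times and each element of $G\setminus(S\cup\{e\})$ exactly $\mu$ times. A $(v,s,k,\lambda,\mu)$-external partial difference family (EPDF) is defined identically with ${\rm Ext}(A)$ in place of ${\rm Int}(A)$. *)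

(* Defs.v *)
From mathcomp Require Import all_boot all_order all_algebra all_fingroup.
Set Implicit Arguments. Unset Strict Implicit. Unset Printing Implicit Defensive.

(* A family of subsets of a finite group gT is given by an index set P : {set I}
   and a map A : I -> {set gT}; the members are A i for i in P. *)
Section PDF.
Variables (gT : finGroupType) (I : finType).
Local Open Scope group_scope.

(* multiplicity of g in Int(A) = multiset union of Delta(A_i) *)
Definition int_mult (P : {set I}) (A : I -> {set gT}) (g : gT) : nat :=
  \sum_(i in P) #|[set xy in setX (A i) (A i) | (xy.1 != xy.2) && (xy.1 * xy.2^-1 == g)%g]|.

(* multiplicity of g in Ext(A) = multiset union of Delta(A_i, A_j), i <> j *)
Definition ext_mult (P : {set I}) (A : I -> {set gT}) (g : gT) : nat :=
  \sum_(i in P) \sum_(j in P | j != i)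
     #|[set xy in setX (A i) (A j) | (xy.1 * xy.2^-1 == g)%g]|.

Definition pdf_shape (v s k : nat) (P : {set I}) (A : I -> {set gT}) : Prop :=
  [/\ #|[set: gT]| = v, #|P| = s,
      (forall i, i \in P -> #|A i| = k /\ (1%g \notin A i))
    & (forall i j, i \in P -> j \in P -> i != j -> [disjoint A i & A j])].

Definition union_fam (P : {set I}) (A : I -> {set gT}) : {set gT} :=
  \bigcup_(i in P) A i.

Definition is_DPDF (v s k lam mu : nat) (P : {set I}) (A : I -> {set gT}) : Prop :=
  pdf_shape v s k P A /\
  forall g : gT,
    (g \in union_fam P A -> int_mult P A g = lam) /\
    (g \notin union_fam P A -> g != 1%g -> int_mult P A g = mu).

Definition is_EPDF (v s k lam mu : nat) (P : {set I}) (A : I -> {set gT}) : Prop :=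
  pdf_shape v s k P A /\
  forall g : gT,
    (g \in union_fam P A -> ext_mult P A g = lam) /\
    (g \notin union_fam P A -> g != 1%g -> ext_mult P A g = mu).
End PDF.

(* GF(q) inside a field F with q^2 elements: the fixed points of x |-> x^q *)
Definition subGF (F : finFieldType) (q : nat) : {set F} :=
  [set x : F | (x ^+ q == x)%R].

Definition S_set (F : finFieldType) (q : nat) (alpha c : F) : {set {unit F}} :=
  [set u : {unit F} | [exists a in @subGF F q, (val u == a + c * alpha)%R]].

Definition S'_set (F : finFieldType) (q : nat) (alpha c : F) : {set 'Z_(q ^ 2 - 1)} :=
  [set i : 'Z_(q ^ 2 - 1) | [exists u in @S_set F q alpha c, (val u == alpha ^+ (val i))%R]].

Definition subGFstar (F : finFieldType) (q : nat) : {set F} :=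
  @subGF F q :\ (0 : F)%R.

(* Main.v *)
Require Import Defs.
From mathcomp Require Import all_boot all_order all_algebra all_fingroup all_field.
From mathcomp Require Import ring zify.
Set Implicit Arguments. Unset Strict Implicit. Unset Printing Implicit Defensive.
Import GRing.Theory FinRing.Theory.

Section Field.
Variables (F : finFieldType) (q p k : nat) (alpha : F).
Hypotheses (pr_p : prime p) (k_gt0 : 0 < k) (qE : q = p ^ k) (cardF : #|F| = q ^ 2)
  (prim : ((q ^ 2 - 1).-primitive_root alpha)%R).
Local Open Scope ring_scope.
Local Notation K := (@subGF F q).

Lemma q_gt1 : (1 < q)%N.
Proof.
rewrite qE; apply: leq_trans (prime_gt1 pr_p) _.
by rewrite -{1}(expn1 p) leq_pexp2l // prime_gt0.
Qed.

Lemma q_lt_q2 : (q < q ^ 2)%N.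
Proof. by rewrite -{1}(expn1 q) ltn_exp2l ?q_gt1. Qed.

Lemma frobD (x y : F) : (x + y) ^+ q = x ^+ q + y ^+ q.
Proof.
have pc : p \in [pchar F].
  by apply: (@card_finPcharP _ _ (k * 2)%N) => //; rewrite cardF qE -expnM.
rewrite qE; elim: k => [|n IH]; first by rewrite !expr1.
rewrite expnSr !exprM IH.
exact: (pFrobenius_autD_comm pc (mulrC _ _)).
Qed.

Lemma frob0 : (0 : F) ^+ q = 0.
Proof. by rewrite expr0n; case: q q_gt1. Qed.

Lemma frobN (x : F) : (- x) ^+ q = - x ^+ q.
Proof. by apply/eqP; rewrite -subr_eq0 opprK -frobD addNr frob0. Qed.

Lemma frobB (x y : F) : (x - y) ^+ q = x ^+ q - y ^+ q.
Proof. by rewrite frobD frobN. Qed.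

Lemma frobq (x : F) : (x ^+ q) ^+ q = x.
Proof. by rewrite -exprM mulnn -cardF expf_card. Qed.

Lemma inK (x : F) : (x \in K) = (x ^+ q == x).
Proof. by rewrite inE. Qed.

Lemma K0 : (0 : F) \in K. Proof. by rewrite inK frob0. Qed.
Lemma K1 : (1 : F) \in K. Proof. by rewrite inK expr1n. Qed.
Lemma KD (x y : F) : x \in K -> y \in K -> x + y \in K.
Proof. by rewrite !inK frobD => /eqP-> /eqP->. Qed.
Lemma KN (x : F) : x \in K -> - x \in K.
Proof. by rewrite !inK frobN => /eqP->. Qed.
Lemma KB (x y : F) : x \in K -> y \in K -> x - y \in K.
Proof. by move=> xK yK; rewrite KD ?KN. Qed.
Lemma KM (x y : F) : x \in K -> y \in K -> x * y \in K.
Proof. by rewrite !inK exprMn => /eqP-> /eqP->. Qed.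
Lemma KV (x : F) : x \in K -> x^-1 \in K.
Proof. by rewrite !inK exprVn => /eqP->. Qed.

Lemma alpha_ne : alpha != alpha ^+ q.
Proof.
apply/negP => /eqP eq.
have a0 : alpha != 0.
  apply/negP => /eqP a0; have := prim_expr_order prim; rewrite a0 expr0n.
  have -> : (q ^ 2 - 1 == 0)%N = false.
    by apply/negbTE; rewrite -lt0n subn_gt0 (ltn_trans q_gt1 q_lt_q2).
  by move/eqP; rewrite eq_sym oner_eq0.
have h : alpha ^+ (q - 1) = 1.
  apply: (mulIf a0); rewrite mul1r -exprSr subn1 prednK ?(ltnW q_gt1) //.
move: h => /eqP; rewrite -(prim_order_dvd prim) => /dvdn_leq.
have q1 : (0 < q - 1)%N by rewrite subn_gt0 q_gt1.
move/(_ q1); have := q_lt_q2; have := q_gt1; move: (q ^ 2)%N => Q; lia.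
Qed.

Let delta := alpha - alpha ^+ q.
Lemma delta_ne : delta != 0.
Proof. by rewrite subr_eq0 alpha_ne. Qed.

Definition pi (z : F) := (z - z ^+ q) / delta.

Lemma piK z : pi z \in K.
Proof.
rewrite inK /pi exprMn exprVn !frobB !frobq.
by rewrite -[alpha ^+ q - alpha]opprB -[z ^+ q - z]opprB invrN mulrNN.
Qed.

Lemma piD x y : pi (x + y) = pi x + pi y.
Proof. rewrite /pi frobD; ring. Qed.

Lemma piZ b z : b \in K -> pi (b * z) = b * pi z.
Proof. rewrite inK => /eqP bK; rewrite /pi exprMn bK; ring. Qed.

Lemma piKz a : a \in K -> pi a = 0.
Proof. by rewrite inK /pi => /eqP->; rewrite subrr mul0r. Qed.

Lemma pialpha : pi alpha = 1.
Proof. by rewrite /pi divff // delta_ne. Qed.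

Lemma pi_lin a b : a \in K -> b \in K -> pi (a + b * alpha) = b.
Proof. by move=> aK bK; rewrite piD piKz // piZ // pialpha mulr1 add0r. Qed.

Lemma pi1 z : z - pi z * alpha \in K.
Proof.
have e : z ^+ q = z - pi z * delta by rewrite /pi divfK ?delta_ne //; ring.
have := piK z; rewrite !inK => /eqP pK.
by rewrite frobB exprMn pK e /delta; apply/eqP; ring.
Qed.

Local Notation P := (@subGFstar F q).
Local Notation S := (@S_set F q alpha).

Lemma inP c : (c \in P) = (c != 0%R) && (c \in K).
Proof. by rewrite !inE. Qed.

Lemma inS c (u : {unit F}) : c \in K -> (u \in S c) = (pi (val u) == c).
Proof.
move=> cK; rewrite inE; apply/existsP/eqP => [[a /andP[aK /eqP->]]|e].
  exact: pi_lin.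
exists (val u - c * alpha)%R; rewrite (subrK (c * alpha)%R) eqxx andbT -e.
exact: pi1.
Qed.

Lemma mk_unit (z : F) : z != 0%R -> exists y : {unit F}, val y = z.
Proof.
move=> z0; exists (insubd (1%g : {unit F}) z); apply: insubdK.
by rewrite unfold_in /= unitfE.
Qed.

Lemma cnt_pairs (g : {unit F}) c d :
  #|[set xy in setX (S c) (S d) | (xy.1 * xy.2^-1 == g)%g]| =
  #|[set y | (y \in S d) && (g * y \in S c)%g]|.
Proof.
have inj : injective (fun y : {unit F} => (g * y, y)%g) by move=> y z [_].
rewrite -(card_imset _ inj); apply: eq_card => -[x y].
rewrite !inE /=; apply/idP/imsetP => [/andP[/andP[xS yS] /eqP e]|[y0]].
  by exists y; rewrite ?inE ?yS -e ?mulgKV //=.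
rewrite inE => /andP[yS gS] [-> ->].
by move: yS gS; rewrite !inE => -> ->; rewrite mulgK eqxx.
Qed.


Lemma cnt_lin (g : {unit F}) c d : c \in K -> d \in P ->
  #|[set y | (y \in S d) && (g * y \in S c)%g]| =
  #|[set b in K | b * pi (val g) + d * pi (val g * alpha) == c]|.
Proof.
move=> cK; rewrite inP => /andP[d0 dK].
have inj : injective (fun y : {unit F} => val y - d * alpha).
  by move=> y z /addIr /val_inj.
rewrite -(card_imset _ inj); apply: eq_card => b; rewrite inE.
apply/imsetP/andP => [[y] | [bK /eqP e]].
  rewrite inE !inS // ?val_unitM => /andP[/eqP yd /eqP gy] ->.
  set b' := val y - d * alpha.
  have b'K : b' \in K by rewrite /b' -yd pi1.
  split => //; apply/eqP; rewrite -gy -[val y](subrK (d * alpha)) -/b'.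
  by rewrite mulrDr piD [val g * b']mulrC (piZ (val g) b'K) [val g * (d * alpha)]mulrCA (piZ _ dK).
have nz : b + d * alpha != 0.
  apply: contra_neq d0 => e0.
  by rewrite -(pi_lin bK dK) e0 piKz ?K0.
have [y yv] := mk_unit nz.
exists y; last by rewrite yv addrK.
rewrite inE !inS // val_unitM yv pi_lin // eqxx /=.
by rewrite mulrDr piD [val g * b]mulrC (piZ (val g) bK) [val g * (d * alpha)]mulrCA (piZ _ dK) e.
Qed.

Lemma cardK : #|K| = q.
Proof.
have inj : {in setX K K &, injective (fun ab : F * F => ab.1 + ab.2 * alpha)}.
  move=> [a b] [a' b'] /=; rewrite !in_setX => /andP[aK bK] /andP[a'K b'K] e.
  have eb : b = b' by rewrite -(pi_lin aK bK) e pi_lin.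
  by rewrite eb in e *; move/addIr: e => ->.
have im : (fun ab : F * F => ab.1 + ab.2 * alpha) @: setX K K = setT.
  apply/setP => z; rewrite inE; apply/imsetP.
  by exists (z - pi z * alpha, pi z); rewrite ?in_setX ?pi1 ?piK //= subrK.
have := card_in_imset inj; rewrite im cardsT cardF cardsX mulnn.
by move/(expIn (isT : (0 < 2)%N)).
Qed.

Lemma cnt_val (g : {unit F}) c d : c \in P -> d \in P ->
  #|[set b in K | b * pi (val g) + d * pi (val g * alpha) == c]| =
  if pi (val g) != 0 then 1%N else if d * val g == c then q else 0%N.
Proof.
rewrite !inP => /andP[c0 cK] /andP[d0 dK].
case: ifP => [v0|/negbFE/eqP v0].
  set v := pi (val g); set w := pi (val g * alpha).
  rewrite -(cards1 ((c - d * w) / v)); apply: eq_card => b; rewrite !inE.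
  apply/andP/eqP => [[bK /eqP e]|->].
    by rewrite -e addrK mulfK.
  split; first by rewrite -inK; apply: KM; [apply: KB => //; apply: KM => //; apply: piK | apply: KV; apply: piK].
  by apply/eqP; rewrite divfK // subrK.
have gK : val g \in K by have := pi1 (val g); rewrite v0 mul0r subr0.
have w : pi (val g * alpha) = val g by rewrite piZ // pialpha mulr1.
rewrite v0 w; case: ifP => e.
  by rewrite -[RHS]cardK; apply: eq_card => b; rewrite !inE mulr0 add0r e andbT.
by apply: eq_card0 => b; rewrite !inE mulr0 add0r e andbF.
Qed.

Lemma PK c : c \in P -> c \in K.
Proof. by rewrite inP => /andP[]. Qed.
Lemma P0 c : c \in P -> c != 0.
Proof. by rewrite inP => /andP[]. Qed.

Lemma Ncount (g : {unit F}) c d : c \in P -> d \in P ->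
  #|[set xy in setX (S c) (S d) | (xy.1 * xy.2^-1 == g)%g]| =
  if pi (val g) != 0 then 1%N else if d * val g == c then q else 0%N.
Proof. by move=> cP dP; rewrite cnt_pairs cnt_lin ?cnt_val ?PK. Qed.

Lemma inU (g : {unit F}) : (g \in union_fam P S) = (pi (val g) != 0).
Proof.
rewrite /union_fam; apply/bigcupP/idP => [[c cP]|nz].
  by rewrite inS ?PK // => /eqP->; apply: P0.
by exists (pi (val g)); rewrite ?inP ?nz ?piK // inS ?piK.
Qed.

Lemma cardP : #|P| = (q - 1)%N.
Proof.
have h := cardsD1 0 K; rewrite K0 cardK add1n in h.
by rewrite /subGFstar [in RHS]h subn1.
Qed.

Lemma cardS c : c \in P -> #|S c| = q.
Proof.
move=> cP; transitivity #|[set y | (y \in S c) && (1 * y \in S c)%g]|.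
  by apply: eq_card => y; rewrite inE mul1g andbb.
by rewrite cnt_lin ?PK // cnt_val // val_unit1 piKz ?K1 // eqxx mulr1 eqxx.
Qed.

Lemma one_notin c : c \in P -> (1%g : {unit F}) \notin S c.
Proof. by move=> cP; rewrite inS ?PK // val_unit1 piKz ?K1 // eq_sym P0. Qed.

Lemma disjS c d : c \in P -> d \in P -> c != d -> [disjoint S c & S d].
Proof.
move=> cP dP cd; apply/pred0P => y /=; rewrite !inS ?PK //.
by case: eqP => // ->; rewrite (negbTE cd).
Qed.

Lemma shapeU : pdf_shape (q ^ 2 - 1) (q - 1) q P S.
Proof.
split.
- by rewrite card_finField_unit cardF subn1.
- exact: cardP.
- by move=> i iP; split; [apply: cardS | apply: one_notin].
- by move=> i j iP jP; apply: disjS.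
Qed.

Lemma int_eq (g : {unit F}) c : g != 1%g ->
  #|[set xy in setX (S c) (S c) | (xy.1 != xy.2) && (xy.1 * xy.2^-1 == g)%g]| =
  #|[set xy in setX (S c) (S c) | (xy.1 * xy.2^-1 == g)%g]|.
Proof.
move=> g1; apply: eq_card => -[x y]; rewrite !in_set /=.
have [e|ne] := eqVneq (x * y^-1)%g g; rewrite ?andbF ?andbT //.
suff xy : x != y by rewrite xy andbT.
by apply: contra_neq g1 => exy; rewrite -e exy mulgV.
Qed.

Lemma g1U (g : {unit F}) : g \in union_fam P S -> g != 1%g.
Proof.
by move=> gU; apply/eqP => e; move: gU; rewrite inU e val_unit1 piKz ?K1 ?eqxx.
Qed.

Lemma unit_DPDF : is_DPDF (q ^ 2 - 1) (q - 1) q (q - 1) 0 P S.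
Proof.
split; first exact: shapeU.
move=> g; split => [gU|gU g1].
  have g1 := g1U gU; rewrite inU in gU.
  rewrite /int_mult (eq_bigr (fun _ => 1%N)) ?sum_nat_const ?cardP ?muln1 // => c cP.
  by rewrite int_eq // Ncount // gU.
rewrite inU negbK in gU.
rewrite /int_mult big1 // => c cP.
rewrite int_eq // Ncount // (eqP gU) eqxx /=.
have -> : (c * val g == c) = false.
  apply/negbTE; apply: contra_neq g1 => e.
  apply: val_inj; rewrite val_unit1; apply: (mulfI (P0 cP)).
  by rewrite mulr1.
by [].
Qed.

Lemma unit_EPDF :
  is_EPDF (q ^ 2 - 1) (q - 1) q ((q - 1) * (q - 2)) (q ^ 2 - q) P S.
Proof.
split; first exact: shapeU.
move=> g; split => [gU|gU g1].
  have g1 := g1U gU; rewrite inU in gU.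
  rewrite /ext_mult (eq_bigr (fun _ => (q - 2)%N)) ?sum_nat_const ?cardP // => c cP.
  rewrite (eq_bigr (fun _ => 1%N)) => [|d /andP[dP _]]; last by rewrite Ncount // gU.
  rewrite sum1_card.
  have h := cardsD1 c P; rewrite cP cardP add1n in h.
  transitivity #|P :\ c|; last by lia.
  by apply: eq_card => d; rewrite in_setD1 andbC.
rewrite inU negbK in gU.
have gK : val g \in K by have := pi1 (val g); rewrite (eqP gU) mul0r subr0.
have g0 : val g != 0 by rewrite -unitfE (valP g).
have gn1 : val g != 1.
  by apply: contra_neq g1 => e; apply: val_inj; rewrite val_unit1.
rewrite /ext_mult (eq_bigr (fun _ => q)) ?sum_nat_const ?cardP => [|c cP].
  by rewrite mulnBl mul1n mulnn.
have d0P : (c / val g \in P) && (c / val g != c).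
  rewrite inP -andbA; apply/and3P; split; first by apply: mulf_neq0; [apply: P0 | rewrite invr_eq0].
    by apply: KM; [apply: PK | apply: KV].
  apply/eqP; rewrite -[X in _ = X]mulr1 => /(mulfI (P0 cP)) /eqP.
  by rewrite invr_eq1 (negbTE gn1).
rewrite (bigD1 (c / val g)) //=.
rewrite Ncount //; last by case/andP: d0P.
rewrite (eqP gU) eqxx /= divfK // eqxx big1 ?addn0 // => d /andP[/andP[dP _] dd0].
rewrite Ncount // (eqP gU) eqxx /=.
have -> : (d * val g == c) = false.
  by apply: contraNF dd0 => /eqP <-; rewrite mulfK.
by [].
Qed.

End Field.


Section Transfer.
Variables (gT hT : finGroupType) (I : finType) (f : gT -> hT).
Hypotheses (fbij : bijective f) (fM : {morph f : x y / (x * y)%g}).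
Variables (P : {set I}) (A : I -> {set hT}) (A' : I -> {set gT}).
Hypothesis AE : forall i, A' i = f @^-1: A i.

Let finj : injective f := bij_inj fbij.
Lemma tf1 : f 1%g = 1%g.
Proof. by apply: (@mulgI _ (f 1%g)); rewrite -fM !mulg1. Qed.
Lemma tfV x : f x^-1%g = (f x)^-1%g.
Proof. by apply: (@mulgI _ (f x)); rewrite -fM !mulgV tf1. Qed.

Lemma tcard (B : {set hT}) : #|f @^-1: B| = #|B|.
Proof. by apply: on_card_preimset; apply: onW_bij. Qed.

Let h := fun xy : gT * gT => (f xy.1, f xy.2).
Lemma hbij : bijective h.
Proof.
case: fbij => g fg gf.
exists (fun xy : hT * hT => (g xy.1, g xy.2)).
  by case=> x y; rewrite /h /= !fg.
by case=> x y; rewrite /h /= !gf.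
Qed.

Lemma hcard (B : {set hT * hT}) : #|h @^-1: B| = #|B|.
Proof. by apply: on_card_preimset; apply: onW_bij; apply: hbij. Qed.

Lemma tint g : int_mult P A' g = int_mult P A (f g).
Proof.
apply: eq_bigr => i _; rewrite -hcard; apply: eq_card => -[x y].
by rewrite !inE /= !AE !inE -tfV -fM !(inj_eq finj).
Qed.

Lemma text g : ext_mult P A' g = ext_mult P A (f g).
Proof.
apply: eq_bigr => i _; apply: eq_bigr => j _; rewrite -hcard; apply: eq_card => -[x y].
by rewrite !inE /= !AE !inE -tfV -fM !(inj_eq finj).
Qed.

Lemma tunion g : (g \in union_fam P A') = (f g \in union_fam P A).
Proof.
by apply/bigcupP/bigcupP => -[i iP]; rewrite ?AE ?inE => gi; exists i; rewrite ?AE ?inE.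
Qed.

Lemma tshape v s k : pdf_shape v s k P A -> pdf_shape v s k P A'.
Proof.
case=> cT cP hk hd; split => //.
- by rewrite cardsT (bij_eq_card fbij) -cardsT.
- move=> i iP; have [k1 n1] := hk i iP.
  by rewrite AE tcard k1 inE tf1.
- move=> i j iP jP ij; have /pred0P H := hd i j iP jP ij.
  by apply/pred0P => x /=; rewrite !AE !inE; apply: H.
Qed.

Lemma tDPDF v s k lam mu :
  is_DPDF v s k lam mu P A -> is_DPDF v s k lam mu P A'.
Proof.
case=> sh H; split; first exact: tshape.
move=> g; have [h1 h2] := H (f g); split => [gU|gU g1].
  by rewrite tint h1 // -tunion.
by rewrite tint h2 -?tunion // -tf1 (inj_eq finj).
Qed.

Lemma tEPDF v s k lam mu :
  is_EPDF v s k lam mu P A -> is_EPDF v s k lam mu P A'.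
Proof.
case=> sh H; split; first exact: tshape.
move=> g; have [h1 h2] := H (f g); split => [gU|gU g1].
  by rewrite text h1 // -tunion.
by rewrite text h2 -?tunion // -tf1 (inj_eq finj).
Qed.
End Transfer.

Lemma Zpart (F : finFieldType) (q p k : nat) (alpha : F) :
  prime p -> 0 < k -> q = p ^ k -> #|F| = q ^ 2 ->
  ((q ^ 2 - 1).-primitive_root alpha)%R ->
  exists f : 'Z_(q ^ 2 - 1) -> {unit F},
    [/\ bijective f, {morph f : x y / (x * y)%g} &
        forall c, @S'_set F q alpha c = f @^-1: @S_set F q alpha c].
Proof.
move=> pr k0 qE cardF prim.
have q1 := q_gt1 pr k0 qE.
have n1 : 1 < q ^ 2 - 1 by have := q_lt_q2 pr k0 qE; lia.
have cast := Zp_cast n1.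
have a0 : (alpha != 0)%R.
  apply/eqP => a0; have := prim_expr_order prim; rewrite a0 expr0n.
  have -> : (q ^ 2 - 1 == 0) = false by apply/negbTE; lia.
  by move/eqP; rewrite eq_sym oner_eq0.
pose f (i : 'Z_(q ^ 2 - 1)) := insubd (1%g : {unit F}) (alpha ^+ i)%R.
have fv : forall i, val (f i) = (alpha ^+ i)%R.
  by move=> i; apply: insubdK; rewrite unfold_in /= unitfE expf_neq0.
have lt : forall x : 'Z_(q ^ 2 - 1), x < q ^ 2 - 1.
  by move=> x; apply: leq_trans (ltn_ord x) _; rewrite cast.
have fm : {morph f : x y / (x * y)%g}.
  move=> x y; apply: val_inj; rewrite val_unitM !fv /=.
  have aN : (alpha ^+ (Zp_trunc (q ^ 2 - 1)).+2 = 1)%R.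
    by rewrite cast (prim_expr_order prim).
  by rewrite (expr_mod _ aN) exprD.
have finj : injective f.
  move=> x y /(congr1 val); rewrite !fv => /eqP.
  rewrite (eq_prim_root_expr prim) !modn_small ?lt // => /eqP.
  exact: val_inj.
exists f; split => //.
  apply: inj_card_bij => //.
  by rewrite card_ord cast -cardsT card_finField_unit cardF subn1.
move=> c; apply/setP => i; rewrite !inE; apply/existsP/idP => [[u /andP[uS /eqP e]]|fiS].
  have -> : f i = u by apply: val_inj; rewrite fv e.
  by move: uS; rewrite inE.
by exists (f i); rewrite inE fiS fv eqxx.
Qed.

Theorem mainTheorem1 (F : finFieldType) (q : nat) (alpha : F) :
  (exists p k : nat, [/\ prime p, 0 < k & q = p ^ k]) ->
  #|F| = q ^ 2 ->
  ((q ^ 2 - 1).-primitive_root alpha)%R ->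
  (is_DPDF (q ^ 2 - 1) (q - 1) q (q - 1) 0
           (@subGFstar F q) (@S_set F q alpha)
   /\ is_EPDF (q ^ 2 - 1) (q - 1) q ((q - 1) * (q - 2)) (q ^ 2 - q)
           (@subGFstar F q) (@S_set F q alpha))
  /\
  (is_DPDF (q ^ 2 - 1) (q - 1) q (q - 1) 0
           (@subGFstar F q) (@S'_set F q alpha)
   /\ is_EPDF (q ^ 2 - 1) (q - 1) q ((q - 1) * (q - 2)) (q ^ 2 - q)
           (@subGFstar F q) (@S'_set F q alpha)).
Proof.
move=> [p [k [pr k0 qE]]] cardF prim.
have [f [fb fm fS]] := Zpart pr k0 qE cardF prim.
have D := unit_DPDF pr k0 qE cardF prim.
have E := unit_EPDF pr k0 qE cardF prim.
split; split => //.
  exact: (tDPDF fb fm fS).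
exact: (tEPDF fb fm fS).
Qed.
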